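(* Let $A$ be a two-dimensional evolution algebra over a field $\mathbb{K}$ with $\dim(A^2)=1$, $A^3\neq0$ and $(A^2)^2=0$. Then there is a natural basis $\{e,f\}$ of $A$ with $e^2=e-f$ and $f^2=-e+f$. The square of $A$ is $\mathfrak{D}_5$, and $A$ is not alternative.
   Context: An evolution algebra over $\mathbb{K}$ is a $\mathbb{K}$-algebra with a basis $\{e_i\}$ (natural basis) such that $e_ie_j=0$ for $i\neq j$. $A^2$ is the span of $\{xy: x,y\in A\}$, $A^3$ the span of $\{xy: x\in A,y\in A^2\}$, $(A^2)^2$ the span of $\{xy:x,y\in A^2\}$. For a natural basis $\{e_1,e_2\}$ with $e_1^2=\omega_{11}e_1+\omega_{21}e_2$, $e_2^2=\omega_{12}e_1+\omega_{22}e_2$, its pseudo-square is $\{L,T,R,D\}$-subset with $L,T,R,D$ present iff $\omega_{11},\omega_{12},\omega_{22},\omega_{21}$ respectively are nonzero; the square of $A$ is the set of pseudo-squares of all natural bases; $\mathfrak{D}_5=\{\{L,T,R,D\}\}$. $A$ is alternative if $x^2y=x(xy)$ and $yx^2=(yx)x$ for all $x,y\in A$. *)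

(* Defs.v *)
From HB Require Import structures.
From mathcomp Require Import all_boot all_order all_algebra.
Set Implicit Arguments. Unset Strict Implicit. Unset Printing Implicit Defensive.
Import GRing.Theory.
Local Open Scope ring_scope.

Inductive Letter := LL | TT | RR | DD.

Definition letter_to (l : Letter) : 'I_4 :=
  match l with LL => inord 0 | TT => inord 1 | RR => inord 2 | DD => inord 3 end.
Definition letter_of (i : 'I_4) : Letter :=
  match val i with 0 => LL | 1 => TT | 2 => RR | _ => DD end.
Lemma letterK : cancel letter_to letter_of.
Proof. by case; rewrite /letter_of /= inordK. Qed.
HB.instance Definition _ := Finite.copy Letter (can_type letterK).

Section EvolutionAlgebra.
Variables (K : fieldType) (A : vectType K) (mul : A -> A -> A).

Definition bilinear_mul : Prop :=
  (forall (a : K) (x y z : A), mul (a *: x + y) z = a *: mul x z + mul y z) /\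
  (forall (a : K) (x y z : A), mul z (a *: x + y) = a *: mul z x + mul z y).

Definition natural_basis2 (e1 e2 : A) : Prop :=
  basis_of fullv [:: e1; e2] /\ mul e1 e2 = 0 /\ mul e2 e1 = 0.

Definition evolution_algebra2 : Prop :=
  exists e1 e2, natural_basis2 e1 e2.

Definition in_span (S : A -> Prop) (v : A) : Prop :=
  exists s : seq A, (forall x, x \in s -> S x) /\ v \in <<s>>%VS.

Definition A2 (v : A) : Prop := in_span (fun w => exists x y, w = mul x y) v.
Definition A3 (v : A) : Prop :=
  in_span (fun w => exists x y, A2 y /\ w = mul x y) v.
Definition A2sq (v : A) : Prop :=
  in_span (fun w => exists x y, A2 x /\ A2 y /\ w = mul x y) v.

Definition is_subspace_set (P : A -> Prop) (U : {vspace A}) : Prop :=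
  forall v, v \in U <-> P v.

(* pseudo-square of the natural basis {e1, e2}:
   e1^2 = w11 e1 + w21 e2, e2^2 = w12 e1 + w22 e2;
   L iff w11 <> 0, T iff w12 <> 0, R iff w22 <> 0, D iff w21 <> 0 *)
Definition pseudo_square (e1 e2 : A) : {set Letter} :=
  let X := [tuple e1; e2] in
  let w11 := coord X (inord 0) (mul e1 e1) in
  let w21 := coord X (inord 1) (mul e1 e1) in
  let w12 := coord X (inord 0) (mul e2 e2) in
  let w22 := coord X (inord 1) (mul e2 e2) in
  [set l | match l with
           | LL => w11 != 0 | TT => w12 != 0
           | RR => w22 != 0 | DD => w21 != 0 end].

Definition in_square (P : {set Letter}) : Prop :=
  exists e1 e2, natural_basis2 e1 e2 /\ pseudo_square e1 e2 = P.

Definition D5 : {set {set Letter}} := [set [set LL; TT; RR; DD]].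

Definition square_is (F : {set {set Letter}}) : Prop :=
  forall P, in_square P <-> P \in F.

Definition alternative : Prop :=
  forall x y : A, mul (mul x x) y = mul x (mul x y) /\
                  mul y (mul x x) = mul (mul y x) x.

End EvolutionAlgebra.

(* Main.v *)
Require Import Defs.
From HB Require Import structures.
From mathcomp Require Import all_boot all_order all_algebra ring.
Import GRing.Theory.
Local Open Scope ring_scope.

Section H.
Variables (K : fieldType) (A : vectType K) (mul : A -> A -> A).
Hypothesis Hb : bilinear_mul mul.

Lemma bmul0l z : mul 0 z = 0.
Proof.
have := (Hb.1 1 0 0 z); rewrite !scale1r addr0 => H.
by apply: (@addrI _ (mul 0 z)); rewrite addr0 -H.
Qed.
Lemma bmul0r z : mul z 0 = 0.
Proof.
have := (Hb.2 1 0 0 z); rewrite !scale1r addr0 => H.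
by apply: (@addrI _ (mul z 0)); rewrite addr0 -H.
Qed.
Lemma bmulZl a x z : mul (a *: x) z = a *: mul x z.
Proof. by have := Hb.1 a x 0 z; rewrite addr0 bmul0l addr0. Qed.
Lemma bmulZr a x z : mul z (a *: x) = a *: mul z x.
Proof. by have := Hb.2 a x 0 z; rewrite addr0 bmul0r addr0. Qed.
Lemma bmulDl x y z : mul (x + y) z = mul x z + mul y z.
Proof. by have := Hb.1 1 x y z; rewrite !scale1r. Qed.
Lemma bmulDr x y z : mul z (x + y) = mul z x + mul z y.
Proof. by have := Hb.2 1 x y z; rewrite !scale1r. Qed.

Lemma coord2 (g h : A) c d : free [:: g; h] ->
  coord [tuple g; h] (inord 0) (c *: g + d *: h) = c /\
  coord [tuple g; h] (inord 1) (c *: g + d *: h) = d.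
Proof.
move=> fr; rewrite !linearD !linearZ /=.
have -> : (inord 0 : 'I_2) = ord0 by apply/val_inj; rewrite /= inordK.
have -> : (inord 1 : 'I_2) = ord_max by apply/val_inj; rewrite /= inordK.
have := @coord_free _ _ 2 [tuple g; h] ord0 ord0 fr.
have := @coord_free _ _ 2 [tuple g; h] ord0 ord_max fr.
have := @coord_free _ _ 2 [tuple g; h] ord_max ord0 fr.
have := @coord_free _ _ 2 [tuple g; h] ord_max ord_max fr.
rewrite /= => -> -> -> ->.
by rewrite !mulr1 !mulr0 addr0 add0r.
Qed.

Lemma decomp2 (g h : A) v : basis_of fullv [:: g; h] ->
  exists c d, v = c *: g + d *: h.
Proof.
move=> B; have := span_basis B => Sp.
have : v \in <<[tuple g; h]>>%VS by rewrite /= Sp memvf.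
move/coord_span => ->; rewrite !big_ord_recr big_ord0 /= add0r.
by do 2 eexists.
Qed.

Lemma A2_prod x y : A2 mul (mul x y).
Proof.
exists [:: mul x y]; split; last exact: memv_span1.
by move=> z; rewrite inE => /eqP ->; exists x, y.
Qed.

Lemma A2sq_prod x y : A2 mul x -> A2 mul y -> A2sq mul (mul x y).
Proof.
move=> Hx Hy; exists [:: mul x y]; split; last exact: memv_span1.
by move=> z; rewrite inE => /eqP ->; exists x, y.
Qed.

Lemma span_zero (S : A -> Prop) v :
  (forall x, S x -> x = 0) -> in_span S v -> v = 0.
Proof.
move=> H [s [Hs Hv]].
have : (<<s>> <= 0)%VS by apply/span_subvP => x /Hs /H ->; rewrite mem0v.
by move/subvP/(_ _ Hv); rewrite memv0 => /eqP.
Qed.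

Lemma field_facts (a b x y : K) :
  a * x ^+ 2 + b * y ^+ 2 = 0 -> (x * a != 0) || (y * b != 0) ->
  [&& a != 0, b != 0, x != 0 & y != 0].
Proof.
move=> E N.
have Hx : x != 0.
  apply/eqP => x0; move: E N; rewrite x0 expr0n /= mulr0 add0r mul0r eqxx /=.
  by move/eqP; rewrite mulf_eq0 expf_eq0 /= => /orP [] /eqP ->; rewrite ?mulr0 ?mul0r eqxx.
have Hy : y != 0.
  apply/eqP => y0; move: E N; rewrite y0 expr0n /= mulr0 addr0 mul0r eqxx orbF.
  by move/eqP; rewrite mulf_eq0 expf_eq0 /= => /orP [] /eqP ->; rewrite ?mulr0 ?mul0r eqxx.
have Ha : a != 0.
  apply/eqP => a0; move: E N; rewrite a0 mul0r add0r mulr0 eqxx /=.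
  by move/eqP; rewrite mulf_eq0 expf_eq0 /= => /orP [] /eqP ->; rewrite ?mulr0 ?mul0r eqxx.
have Hb' : b != 0.
  apply/eqP => b0; move: E N; rewrite b0 mul0r addr0 mulr0 eqxx orbF.
  by move/eqP; rewrite mulf_eq0 expf_eq0 /= => /orP [] /eqP ->; rewrite ?mulr0 ?mul0r eqxx.
by rewrite Ha Hb' Hx Hy.
Qed.

Lemma core (U : {vspace A}) g h :
  is_subspace_set (A2 mul) U -> \dim U = 1%N ->
  (exists v, A3 mul v /\ v != 0) ->
  (forall v, A2sq mul v -> v = 0) ->
  natural_basis2 mul g h ->
  exists a b x y : K, [&& a != 0, b != 0, x != 0 & y != 0] /\
    a * x ^+ 2 + b * y ^+ 2 = 0 /\
    mul g g = (a * x) *: g + (a * y) *: h /\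
    mul h h = (b * x) *: g + (b * y) *: h.
Proof.
move=> HU dU [v0 [Hv0 v0nz]] Hsq [B [gh hg]].
set w := vpick U.
have wU : w \in U by exact: memv_pick.
have wnz : w != 0.
  by rewrite /w vpick0; apply/eqP => U0; move: dU; rewrite U0 dimv0.
have lineU : <[w]>%VS = U.
  apply/eqP; rewrite eqEdim dU dim_vline wnz leqnn andbT; exact: wU.
have inU : forall u, A2 mul u -> exists k, u = k *: w.
  by move=> u /HU; rewrite -lineU => /vlineP.
have [a ga] := inU _ (A2_prod g g).
have [b hb] := inU _ (A2_prod h h).
have [x [y wE]] := decomp2 g h w B.
have fr := basis_free B.
have ww : mul w w = 0 by apply: Hsq; apply: A2sq_prod; apply/HU.
have wwE : mul w w = (a * x ^+ 2 + b * y ^+ 2) *: w.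
  rewrite {1 2}wE !(bmulDl, bmulDr, bmulZl, bmulZr) gh hg ga hb.
  rewrite !scaler0 !addr0 !add0r !scalerA scalerDl.
  by rewrite !expr2 [a * _]mulrC [b * _]mulrC.
have E : a * x ^+ 2 + b * y ^+ 2 = 0.
  by apply/eqP; move: ww; rewrite wwE => /eqP; rewrite scaler_eq0 (negbTE wnz) orbF.
have N : (x * a != 0) || (y * b != 0).
  rewrite -negb_and; apply/negP => /andP [/eqP xa /eqP yb].
move/eqP: v0nz; apply.
  apply: (span_zero _ _ _ Hv0) => z [x' [y' [Hy' ->]]].
  have [k ->] := inU _ Hy'.
  have [c [d ->]] := decomp2 g h x' B.
  rewrite !(bmulDl, bmulZl, bmulZr) wE !(bmulDr, bmulZr) gh hg ga hb.
  rewrite !scaler0 !addr0 !add0r !scalerA.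
  by rewrite -(mulrA (c * k)) -(mulrA (d * k)) xa yb !mulr0 !scale0r addr0.
have /and4P [an bn xn yn] := field_facts _ _ _ _ E N.
exists a, b, x, y; split; first by rewrite an bn xn yn.
split; first exact: E.
by rewrite ga hb wE !scalerDr !scalerA.
Qed.

Lemma ps_full g h (a b x y : K) :
  natural_basis2 mul g h -> [&& a != 0, b != 0, x != 0 & y != 0] ->
  mul g g = (a * x) *: g + (a * y) *: h ->
  mul h h = (b * x) *: g + (b * y) *: h ->
  pseudo_square mul g h = [set LL; TT; RR; DD].
Proof.
move=> [B _] /and4P [an bn xn yn] gg hh.
have fr := basis_free B.
have [c0 c1] := coord2 g h (a * x) (a * y) fr.
have [d0 d1] := coord2 g h (b * x) (b * y) fr.
apply/setP => l; rewrite /pseudo_square !inE gg hh c0 c1 d0 d1.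
by case: l; rewrite /= mulf_neq0 // eqxx ?orbT.
Qed.
End H.
Arguments core {K A mul} Hb {U g h}.
Arguments bmulZl {K A mul} Hb.
Arguments bmulZr {K A mul} Hb.
Arguments bmulDl {K A mul} Hb.
Arguments bmulDr {K A mul} Hb.
Arguments bmul0l {K A mul} Hb.
Arguments bmul0r {K A mul} Hb.
Arguments ps_full {K A mul g h a b x y}.
Arguments coord2 {K A} g h c d.

Theorem proposition3p10 (K : fieldType) (A : vectType K) (mul : A -> A -> A) :
  bilinear_mul mul ->
  \dim (fullv : {vspace A}) = 2%N ->
  evolution_algebra2 mul ->
  (exists U : {vspace A}, is_subspace_set (A2 mul) U /\ \dim U = 1%N) ->
  (exists v, A3 mul v /\ v != 0) ->
  (forall v, A2sq mul v -> v = 0) ->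
  (exists e f : A, natural_basis2 mul e f /\
     mul e e = e - f /\ mul f f = - e + f) /\
  square_is mul D5 /\
  ~ alternative mul.
Proof.
move=> Hb d2 [g [h NB]] [U [HU dU]] A3nz Hsq.
have [a [b [x [y [nz [E [gg hh]]]]]]] := core Hb HU dU A3nz Hsq NB.
have NB' := NB; case: NB' => [B [gh hg]].
have fr := basis_free B.
move/and4P: (nz) => [an bn xn yn].
have bE : b = - a * x ^+ 2 / y ^+ 2.
  apply: (mulIf (expf_neq0 2 yn)); rewrite mulfVK ?expf_neq0 //.
  by apply/eqP; rewrite -subr_eq0; apply/eqP; rewrite -E; ring.
split.
  pose l := (a * x)^-1; pose m := - y / (a * x ^+ 2).
  have ln : l != 0 by rewrite invr_eq0 mulf_neq0.
  have mn : m != 0 by rewrite mulf_neq0 ?oppr_eq0 ?invr_eq0 ?mulf_neq0 ?expf_neq0.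
  exists (l *: g), (m *: h); split; [split; [|split] | split].
  - rewrite basisEdim /= d2 leqnn andbT -(span_basis B).
    apply/span_subvP => z; rewrite !inE => /orP [] /eqP ->.
      have Hg : l *: g \in <<[:: l *: g; m *: h]>>%VS by apply: memv_span; rewrite !inE eqxx.
      by move: (memvZ l^-1 Hg); rewrite scalerA mulVf // scale1r.
    have Hh : m *: h \in <<[:: l *: g; m *: h]>>%VS by apply: memv_span; rewrite !inE eqxx orbT.
    by move: (memvZ m^-1 Hh); rewrite scalerA mulVf // scale1r.
  - by rewrite (bmulZl Hb) (bmulZr Hb) gh !scaler0.
  - by rewrite (bmulZl Hb) (bmulZr Hb) hg !scaler0.
  - rewrite (bmulZl Hb) (bmulZr Hb) gg !scalerDr !scalerA -scaleNr.
    congr (_ *: _ + _ *: _); rewrite /l /m; field. all: try (rewrite ?an ?xn ?yn //).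
  - rewrite (bmulZl Hb) (bmulZr Hb) hh !scalerDr !scalerA -scaleNr.
    congr (_ *: _ + _ *: _); rewrite /l /m bE; field. all: try (rewrite ?an ?xn ?yn //).
split.
  move=> P; split.
    move=> [g' [h' [NB2 <-]]].
    have [a' [b' [x' [y' [nz' [_ [gg' hh']]]]]]] := core Hb HU dU A3nz Hsq NB2.
    by rewrite (ps_full NB2 nz' gg' hh') inE.
  rewrite inE => /eqP ->; exists g, h; split => //.
  exact: (ps_full NB nz gg hh).
move=> Alt; have [H1 _] := Alt g h.
move: H1; rewrite gh (bmul0r Hb) gg (bmulDl Hb) !(bmulZl Hb) hh gh scaler0 add0r scalerDr !scalerA.
move/(congr1 (coord [tuple g; h] (inord 0))); rewrite (coord2 g h _ _ fr).1 linear0.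
by move/eqP; rewrite !mulf_eq0 (negbTE an) (negbTE bn) (negbTE xn) (negbTE yn).
Qed.
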